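(* Let $d\ge 2$ and $R \subseteq \{0,1,\dots,d-1\}$ with $0 \in R$. Let $m^\star \in \mathcal{M}^s_d(R)$ be an optimal symmetric $R$-estimator, i.e. $\|m^\star - \textsc{max}\|_\infty = \min_{m\in\mathcal{M}_d^s(R)}\|m-\textsc{max}\|_\infty$. For $0\le\epsilon < \mathrm{err}(R)/2$ let $$W(\epsilon; R) = \{x \in [0,1]^d : |x_{(1)} - m^\star(x)| \ge \epsilon\}.$$ Then $\mathrm{vol}(W(\epsilon; R)) \ge (\mathrm{err}(R)/2 - \epsilon)^d$, where $\mathrm{vol}$ is Lebesgue measure on $[0,1]^d$.
   Context: For $x\in\mathbb{R}^d$ and nonempty $A\subseteq\{1,\dots,d\}$, $s(x;A)=\max\{x_j:j\in A\}$. $C(k,r,d)$ is the $k$-th $r$-element subset of $\{1,\dots,d\}$ in lexicographic order. For $R\subseteq\{0,\dots,d-1\}$, $\mathcal{M}_d(R)$ is the set of functions $x\mapsto \beta_0+\sum_{r\in R\setminus\{0\}}\sum_{j=1}^{\binom dr}\beta_r^j s(x;C(j,r,d))$ with real coefficients, the intercept $\beta_0$ being present iff $0\in R$. $\mathcal{M}_d^s(R)$ is the subset of $\mathcal{M}_d(R)$ of functions invariant under every permutation of their $d$ arguments. $\textsc{max}(x)=\max_i x_i = x_{(1)}$, $\|\cdot\|_\infty$ is the sup norm over $[0,1]^d$, and $\mathrm{err}(R)=\min_{m\in\mathcal{M}_d(R)}\|m-\textsc{max}\|_\infty$. *)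

(* Defs.v *)
From HB Require Import structures.
From mathcomp Require Import all_boot all_order all_algebra all_fingroup.
From mathcomp Require Import all_classical all_reals all_analysis.
Set Implicit Arguments. Unset Strict Implicit. Unset Printing Implicit Defensive.
Import Order.TTheory GRing.Theory Num.Theory.
Local Open Scope classical_set_scope.
Local Open Scope ring_scope.

Section Defs.
Variables (R : realType) (d : nat).

(* s(x;A) = max { x_j : j in A }  (A nonempty; value 0 for A empty, never used) *)
Definition smax (A : {set 'I_d}) (x : 'I_d -> R) : R :=
  match [pick i in A] with
  | Some i0 => \big[Num.max/x i0]_(i in A) x i
  | None => 0
  end.

Definition maxfun (x : 'I_d -> R) : R := smax [set: 'I_d] x.

(* M_d(R): beta_0 (present iff 0 \in Rs) + sum over nonempty subsets A with
   |A| in Rs of beta_A * s(x;A).  The coefficient beta_A stands for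
   beta_r^j where A = C(j,r,d), r = |A|. *)
Definition inM (Rs : {pred nat}) (m : ('I_d -> R) -> R) : Prop :=
  exists (b0 : R) (beta : {set 'I_d} -> R), forall x,
    m x = (if 0%N \in Rs then b0 else 0)
          + \sum_(A : {set 'I_d} | (0 < #|A|)%N && (#|A| \in Rs)) beta A * smax A x.

Definition symmetric_fun (m : ('I_d -> R) -> R) : Prop :=
  forall (s : {perm 'I_d}) (x : 'I_d -> R), m (fun i => x (s i)) = m x.

Definition inMs (Rs : {pred nat}) (m : ('I_d -> R) -> R) : Prop :=
  inM Rs m /\ symmetric_fun m.

Definition cube : set ('I_d -> R) := [set x | forall i, 0 <= x i <= 1].

Definition supnorm (f : ('I_d -> R) -> R) : R := sup [set `|f x| | x in cube].

Definition err (Rs : {pred nat}) : R :=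
  inf [set supnorm (fun x => m x - maxfun x) | m in inM Rs].

Definition Wset (mstar : ('I_d -> R) -> R) (eps : R) : set ('I_d -> R) :=
  [set x | cube x /\ eps <= `|maxfun x - mstar x|].

Definition box (a b : 'I_d -> R) : set ('I_d -> R) :=
  [set x | forall i, a i <= x i <= b i].
Definition boxvol (a b : 'I_d -> R) : R := \prod_(i < d) (b i - a i).

Definition box_covers (S : set ('I_d -> R)) :
    set ((nat -> 'I_d -> R) * (nat -> 'I_d -> R)) :=
  [set ab | (forall k i, ab.1 k i <= ab.2 k i) /\
            S `<=` \bigcup_k box (ab.1 k) (ab.2 k)].

Definition lebesgue_outer (S : set ('I_d -> R)) : \bar R :=
  ereal_inf [set (\sum_(0 <= k <oo) (boxvol (ab.1 k) (ab.2 k))%:E)%E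
            | ab in box_covers S].
End Defs.
Arguments inM {R d} Rs m.
Arguments inMs {R d} Rs m.
Arguments supnorm {R d} f.
Arguments maxfun {R d} x.
Arguments err {R} d Rs.
Arguments Wset {R d} mstar eps.
Arguments lebesgue_outer {R d} S.

(* Main.v *)
Require Import Defs.
From HB Require Import structures.
From mathcomp Require Import all_boot all_order all_algebra all_fingroup.
From mathcomp Require Import all_classical all_reals all_analysis.
From mathcomp Require Import measurable_realfun.
From mathcomp Require Import lra.
Import Order.TTheory GRing.Theory Num.Theory.
Local Open Scope classical_set_scope.
Local Open Scope ring_scope.

Section OneD.
Variable R : realType.
Local Notation lam := (@lebesgue_measure R).

Lemma oneD (v a b : nat -> R) (al r c : R) :
  (forall k, 0 <= v k) -> (forall k, a k <= b k) -> 0 <= r ->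
  (forall t, al <= t <= al + r ->
     (c%:E <= \sum_(k <oo) (v k * \1_(`[a k, b k]%classic) t)%:E)%E) ->
  ((c * r)%:E <= \sum_(k <oo) (v k * (b k - a k))%:E)%E.
Proof.
move=> v0 ab r0 H.
have S0 : (0 <= \sum_(k <oo) (v k * (b k - a k))%:E)%E.
  by apply: nneseries_ge0 => n _ _; rewrite lee_fin mulr_ge0 // subr_ge0.
have [c0|c0] := leP c 0.
  by apply: le_trans S0; rewrite lee_fin mulr_le0_ge0.
set D := `[al, al + r]%classic.
have mD : measurable D by exact: measurable_itv.
have lD : lam D = r%:E.
  rewrite lebesgue_measure_itv /= lte_fin; case: ltP => [_|] /=.
    by rewrite -EFinD addrAC subrr add0r.
  by move=> h; apply/eqP; rewrite eq_sym eqe; apply/eqP; lra.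
have mf k : measurable_fun D (fun t => (v k * \1_(`[a k, b k]%classic) t)%:E).
  apply/(measurable_EFinP D (fun t => v k * \1_(`[a k, b k]%classic) t)).
  apply: measurable_funM => //.
have -> : (c * r)%:E = (\int[lam]_(x in D) (cst c%:E) x)%E.
  by rewrite integral_cst // EFinM; congr (_ * _)%E; symmetry; exact: lD.
apply: (@le_trans _ _ (\int[lam]_(x in D) \sum_(k <oo) (v k * \1_(`[a k, b k]%classic) x)%:E)%E).
  apply: ge0_le_integral => //.
  - by move=> x _; rewrite lee_fin ltW.
  - apply: ge0_emeasurable_sum => [k x _ _|k _]; last exact: mf.
    by rewrite lee_fin mulr_ge0.
rewrite integral_nneseries //; last by move=> n x _; rewrite lee_fin mulr_ge0.
apply: lee_nneseries => [n _ _|n _].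
  by apply: integral_ge0 => x _; rewrite lee_fin mulr_ge0.

rewrite (@integralZl_indic _ _ _ lam D mD (fun _ => `[a n, b n]%classic)) //; last first.
  by move=> h; have := v0 n; rewrite leNgt h.
rewrite integral_indic //.
rewrite EFinM; apply: lee_wpmul2l; first by rewrite lee_fin.
apply: (@le_trans _ _ (lam `[a n, b n]%classic)).
  by apply: measureIl; exact: measurable_itv.
have := lebesgue_measure_itv `[a n, b n]. rewrite /= => ->.
by rewrite lte_fin; case: ltP => // _; rewrite lee_fin subr_ge0.
Qed.


Variable d : nat.

Lemma coverS (a b : nat -> 'I_d -> R) (lo : 'I_d -> R) (r : R) :
  (forall k i, a k i <= b k i) -> 0 <= r ->
  forall n (S : {set 'I_d}), #|S| = n -> forall (w : nat -> R) (c : R),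
  (forall k, 0 <= w k) ->
  (forall x : 'I_d -> R, (forall i, lo i <= x i <= lo i + r) ->
     (c%:E <= \sum_(k <oo) (w k * \prod_(i in S) \1_(`[a k i, b k i]%classic) (x i))%:E)%E) ->
  ((c * r ^+ n)%:E <= \sum_(k <oo) (w k * \prod_(i in S) (b k i - a k i))%:E)%E.
Proof.
move=> ab r0; elim => [|n IH] S cS w c w0 H.
  move/eqP: cS; rewrite cards_eq0 => /eqP S0; subst S.
  rewrite expr0 mulr1.
  have := H lo.
  under [X in _ -> (_ <= X)%E]eq_eseriesr do rewrite big_set0.
  under [X in (_ -> (_ <= X)%E) -> _]eq_eseriesr do rewrite big_set0.
  apply => i; rewrite lexx /= lerDl //.
have [j jS] : exists j, j \in S.
  by apply/card_gt0P; rewrite cS.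
pose S' := S :\ j.
have cS' : #|S'| = n by move: cS; rewrite (cardsD1 j S) jS add1n => -[].
have pS (F : 'I_d -> R) : \prod_(i in S) F i = F j * \prod_(i in S') F i.
  rewrite (bigD1 j) //=; congr (_ * _); apply: eq_bigl => i.
  by rewrite /S' in_setD1 andbC.
rewrite exprS mulrA.
under eq_eseriesr do rewrite pS mulrA.
apply: (IH S' cS' (fun k => w k * (b k j - a k j)) (c * r)).
  by move=> k; rewrite mulr_ge0 // subr_ge0.
move=> x xQ.
pose v k := w k * \prod_(i in S') \1_(`[a k i, b k i]%classic) (x i).
have v0 k : 0 <= v k.
  by rewrite mulr_ge0 // prodr_ge0 // => i _; rewrite indicE.
have := @oneD v (fun k => a k j) (fun k => b k j) (lo j) r c v0 (fun k => ab k j) r0.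
under [in X in X -> _]eq_eseriesr do rewrite /v (mulrC _ (b _ j - _)) mulrA (mulrC _ (w _)).
apply => t tQ.
pose x' := fun i => if i == j then t else x i.
have Hx' : forall i, lo i <= x' i <= lo i + r.
  by move=> i; rewrite /x'; case: eqP => [->|_] //; exact: xQ.
apply: le_trans (H x' Hx') _.
apply: lee_nneseries => k _.
  by rewrite lee_fin mulr_ge0 // prodr_ge0 // => i _; rewrite indicE.
rewrite pS /x' eqxx /v -mulrA (mulrC (\1_ _ t)) lee_fin.
rewrite le_eqVlt; apply/orP; left; apply/eqP.
congr (_ * (_ * _)); apply: eq_bigr => i; rewrite /S' in_setD1 => /andP[/negPf -> _] //.
Qed.



Lemma ser_ge_term (u : nat -> \bar R) k : (forall n, (0 <= u n)%E) ->
  (u k <= \sum_(n <oo) u n)%E.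
Proof.
move=> u0; apply: le_trans (nneseries_lim_ge (m:=0) k.+1 _); last by move=> n _ _.
rewrite big_nat_recr //=; rewrite leeDr //.
by apply: sume_ge0 => n _.
Qed.

Lemma cover_box (lo : 'I_d -> R) (r : R) (S : set ('I_d -> R)) : 0 <= r ->
  box lo (fun i => lo i + r) `<=` S ->
  ((r ^+ d)%:E <= lebesgue_outer S)%E.
Proof.
move=> r0 QS; apply: le_ereal_inf_tmp => _ [[a b] /= [ab cov] <-].
have := @coverS a b lo r ab r0 d [set: 'I_d] (etrans (cardsT _) (card_ord d)) (fun=> 1) 1 (fun=> ler01).
rewrite mul1r; under eq_eseriesr do rewrite mul1r.
move=> h; apply: le_trans (h _) _.
  move=> x xQ; have [k _ xk] := cov x (QS x xQ).
  pose u : nat -> \bar R := (fun k0 => ((1:R) * \prod_(i in [set: 'I_d]%SET) \1_(`[a k0 i, b k0 i]%classic) (x i))%:E).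
  have h0 n : (0 <= u n)%E.
    by rewrite /u lee_fin mul1r prodr_ge0 // => i _; rewrite indicE.
  have T := @ser_ge_term u k h0.
  have E : u k = 1%:E.
    rewrite /u mul1r big1 // => i _; rewrite indicE.
    by have := xk i; rewrite /= => hx; rewrite mem_set ?in_itv.
  apply: (@le_trans _ _ (u k)); first by rewrite E.
  exact: T.
apply: lee_nneseries => n _.
  by rewrite lee_fin prodr_ge0 // => i _; rewrite subr_ge0.
rewrite /boxvol lee_fin le_eqVlt; apply/orP; left; apply/eqP.
by apply: eq_bigl => i; rewrite !inE.
Qed.

End OneD.

Section Main.
Variables (R : realType) (d : nat).
Local Notation lam := (@lebesgue_measure R).
Implicit Types (x : 'I_d -> R) (A c : {set 'I_d}).

Lemma smax_ge A x i : i \in A -> x i <= smax A x.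
Proof.
move=> iA; rewrite /smax; case: pickP => [i0 _|/(_ i)]; last by rewrite iA.
by rewrite (bigD1 i) //= le_max lexx.
Qed.

Lemma smax_mem A x i : i \in A -> exists2 j, j \in A & smax A x = x j.
Proof.
move=> iA; rewrite /smax; case: pickP => [i0 i0A|/(_ i)]; last by rewrite iA.
apply: (big_ind (fun v => exists2 j, j \in A & v = x j)).
- by exists i0.
- move=> u v [j1 j1A ->] [j2 j2A ->]; rewrite /Num.max.
  by case: ifP => _; [exists j2|exists j1].
- by move=> j jA; exists j.
Qed.

Arguments smax_ge {A} x {i}.
Arguments smax_mem {A} x {i}.

Definition ind c : 'I_d -> R := fun i => (i \in c)%:R.

Lemma smax_ind A c : (0 < #|A|)%N ->
  smax A (ind c) = ([exists i in A, i \in c] : bool)%:R.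
Proof.
case/card_gt0P => i iA; have [j jA Ej] := smax_mem (ind c) iA.
rewrite Ej /ind.
case: existsP => [[k /andP[kA kc]]|nex].
  have := smax_ge (ind c) kA; rewrite Ej /ind kc.
  by case: (j \in c) => //=; rewrite ler10.
by case jc: (j \in c) => //; case: nex; exists j; rewrite jA jc.
Qed.



Definition ct x (t : R) : {set 'I_d} := [set i | t < x i].
Definition Tc x c : set R := [set t | (0 <= t < 1) /\ ct x t = c].

Lemma Tc_meas x c : measurable (Tc x c).
Proof.
have -> : Tc x c = `[0, 1[%classic `&`
    \bigcap_(i in [set: 'I_d]) (if i \in c then `]-oo, x i[%classic else `[x i, +oo[%classic).
  apply/seteqP; split => t.
    move=> [t01 ctc]; split; first by rewrite /= in_itv.
    move=> i _; rewrite -ctc /ct inE; case: ltP => h /=; rewrite in_itv /= ?andbT //.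
  move=> [t01 H]; split; first by move: t01; rewrite /= in_itv.
  apply/setP => i; rewrite /ct inE; have := H i I.
  by case: (i \in c); rewrite /= in_itv /= ?andbT => h; [|apply/negbTE; rewrite -leNgt].
apply: measurableI; first exact: measurable_itv.
apply: fin_bigcap_measurable; first exact: finite_finset.
by move=> i _; case: ifP => _; exact: measurable_itv.
Qed.

Lemma sum_Tc x (P : pred {set 'I_d}) :
  (\sum_(c | P c) lam (Tc x c))%E = lam [set t : R | (0 <= t < 1) /\ P (ct x t)].
Proof.
have -> : [set t | (0 <= t < 1) /\ P (ct x t)] = \bigcup_(c in [set c | P c]) Tc x c.
  apply/seteqP; split => t.
    by move=> [t01 Pt]; exists (ct x t) => //.
  by move=> [c Pc [t01 ctc]]; split => //; rewrite ctc.
rewrite measure_fin_bigcup; last 3 first.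
- exact: finite_finset.
- by move=> c c' _ _ [t [[_ <-] [_ <-]]].
- by move=> c _; exact: Tc_meas.
rewrite (fsbigE [seq c <- enum {set 'I_d} | P c]) //.
- rewrite big_filter_cond big_enum_cond /=; apply: eq_bigl => c.
  by case Pc: (P c) => //=; rewrite mem_set.
- by rewrite filter_uniq // enum_uniq.
- by move=> c /=; rewrite mem_filter => /andP[].
- by move=> c /= Pc; rewrite mem_filter Pc mem_enum.
Qed.



Definition w x c : R := fine (lam (Tc x c)).

Lemma Tc_sub x c : Tc x c `<=` `[0, 1[%classic.
Proof. by move=> t [t01 _]; rewrite /= in_itv. Qed.

Lemma lam01 : lam `[0, 1[%classic = 1%E.
Proof. by rewrite lebesgue_measure_itv /= lte_fin ltr01 oppr0 adde0. Qed.

Lemma lamE x c : lam (Tc x c) = (w x c)%:E.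
Proof.
rewrite /w fineK // ge0_fin_numE //.
apply: (@le_lt_trans _ _ (lam `[0, 1[%classic)).
  by apply: le_measure; rewrite ?inE; [exact: Tc_meas|exact: measurable_itv|exact: Tc_sub].
by rewrite lam01 ltry.
Qed.

Lemma w_ge0 x c : 0 <= w x c.
Proof. by rewrite /w fine_ge0. Qed.

Lemma sum_w x (P : pred {set 'I_d}) :
  (\sum_(c | P c) w x c)%:E = lam [set t : R | (0 <= t < 1) /\ P (ct x t)].
Proof. by rewrite -sum_Tc -sumEFin; apply: eq_bigr => c _; rewrite lamE. Qed.

Lemma sum_w1 x : \sum_c w x c = 1.
Proof.
have := sum_w x xpredT.
have -> : [set t : R | (0 <= t < 1) /\ xpredT (ct x t)] = `[0, 1[%classic.
  by apply/seteqP; split => t /=; rewrite in_itv /=; [case|split].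
by rewrite lam01 => -[].
Qed.

Lemma smax_ge0 A x : cube x -> (0 < #|A|)%N -> 0 <= smax A x.
Proof.
move=> cx /card_gt0P[i iA]; apply: le_trans (smax_ge x iA).
by have /andP[] := cx i.
Qed.

Lemma smax_le1 A x : cube x -> (0 < #|A|)%N -> smax A x <= 1.
Proof.
move=> cx /card_gt0P[i iA]; have [j _ ->] := smax_mem x iA.
by have /andP[] := cx j.
Qed.

Lemma sum_wA x A : cube x -> (0 < #|A|)%N ->
  \sum_c w x c * smax A (ind c) = smax A x.
Proof.
move=> cx A0.
under eq_bigr do rewrite smax_ind //.
have -> : \sum_(c : {set 'I_d}) w x c * ([exists i in A, i \in c] : bool)%:R =
          \sum_(c : {set 'I_d} | [exists i in A, i \in c]) w x c.
  by rewrite [RHS]big_mkcond; apply: eq_bigr => c _; case: ifP => _; rewrite ?mulr1 ?mulr0.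
apply: EFin_inj; rewrite sum_w.
case/card_gt0P: (A0) => i iA.
have -> : [set t : R | (0 <= t < 1) /\ [exists i in A, i \in ct x t]] =
          `[0, smax A x[%classic.
  apply/seteqP; split => t /=; rewrite in_itv /=.
    move=> [/andP[t0 t1] /existsP[j /andP[jA]]]; rewrite /ct inE => tj.
    by rewrite t0 /=; exact: lt_le_trans tj (smax_ge x jA).
  move=> /andP[t0 ts]; split.
    by rewrite t0 /=; exact: lt_le_trans ts (@smax_le1 A x cx A0).
  have [j jA Ej] := smax_mem x iA.
  by apply/existsP; exists j; rewrite jA /ct inE -Ej.
rewrite lebesgue_measure_itv /= lte_fin; case: ltP => h.
  by rewrite oppr0 adde0.
by apply/eqP; rewrite eq_sym eqe eq_le h (@smax_ge0 A x cx A0).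
Qed.




Lemma ind_cube c : cube (ind c).
Proof. by move=> i; rewrite /ind; case: (i \in c); rewrite /= ?lexx ?ler01. Qed.

Lemma interp x (b : R) (beta : {set 'I_d} -> R) (Sel : pred {set 'I_d}) :
  cube x -> (forall A, Sel A -> (0 < #|A|)%N) ->
  \sum_c w x c * (b + \sum_(A | Sel A) beta A * smax A (ind c)) =
  b + \sum_(A | Sel A) beta A * smax A x.
Proof.
move=> cx SelA.
under eq_bigr do rewrite mulrDr.
rewrite big_split /= -mulr_suml sum_w1 mul1r; congr (_ + _).
under eq_bigr do rewrite mulr_sumr.
rewrite exchange_big /=; apply: eq_bigr => A SA.
under eq_bigr do rewrite mulrCA.
by rewrite -mulr_sumr sum_wA // SelA.
Qed.

Lemma interp_g (Rs : {pred nat}) m x : (0 < d)%N -> inM Rs m -> cube x ->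
  m x - maxfun x = \sum_c w x c * (m (ind c) - maxfun (ind c)).
Proof.
move=> d0 [b0 [beta hm]] cx.
under eq_bigr do rewrite mulrBr.
rewrite sumrB; congr (_ - _).
  under eq_bigr do rewrite hm.
  rewrite interp // ?hm // => A /andP[] //.
rewrite /maxfun; under eq_bigr do rewrite mulrC.
under eq_bigr do rewrite mulrC.
by rewrite sum_wA // cardsT card_ord.
Qed.

Lemma bound_corner (F : ('I_d -> R) -> R) x M :
  F x = \sum_c w x c * F (ind c) -> (forall c, `|F (ind c)| <= M) -> `|F x| <= M.
Proof.
move=> -> HM; apply: le_trans (ler_norm_sum _ _ _) _.
apply: (@le_trans _ _ (\sum_c w x c * M)).
  apply: ler_sum => c _; rewrite normrM ger0_norm ?w_ge0 //.
  by apply: ler_wpM2l; [exact: w_ge0|exact: HM].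
by rewrite -mulr_suml sum_w1 mul1r.
Qed.

Lemma lower_corner (F : ('I_d -> R) -> R) x M cs r :
  F x = \sum_c w x c * F (ind c) -> (forall c, `|F (ind c)| <= M) ->
  `|F (ind cs)| = M -> 1 - 2 * r <= w x cs -> 0 <= M ->
  M * (1 - 4 * r) <= `|F x|.
Proof.
move=> -> HM HMs hw M0.
rewrite (bigD1 cs) //=.
apply: le_trans (lerB_normD _ _).
have S1 := sum_w1 x; rewrite (bigD1 cs) //= in S1.
have H2 : `|\sum_(c | c != cs) w x c * F (ind c)| <= \sum_(c | c != cs) w x c * M.
  apply: le_trans (ler_norm_sum _ _ _) _.
  apply: ler_sum => c _; rewrite normrM ger0_norm ?w_ge0 //.
  by apply: ler_wpM2l; [exact: w_ge0|exact: HM].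
rewrite -mulr_suml in H2.
rewrite normrM ger0_norm ?w_ge0 // HMs.
move: S1 H2; set a := \sum_(i | i != cs) w x i; set b := `|_|; move=> S1 H2.
nra.
Qed.



Lemma w_box x (cs : {set 'I_d}) (r : R) : 0 <= r -> 2 * r <= 1 ->
  (forall i, if i \in cs then 1 - r <= x i else x i <= r) -> 1 - 2 * r <= w x cs.
Proof.
move=> r0 r1 hx; rewrite -lee_fin -lamE.
have -> : (1 - 2 * r)%:E = lam `[r, 1 - r[%classic.
  rewrite lebesgue_measure_itv /= lte_fin; case: ltP => h.
    by rewrite -EFinD; congr (_%:E); lra.
  by congr (_%:E); lra.
apply: le_measure; rewrite ?inE; [exact: measurable_itv|exact: Tc_meas|].
move=> t /=; rewrite in_itv /= => /andP[rt t1]; split.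
  by apply/andP; split; lra.
apply/setP => i; rewrite /ct inE; have := hx i.
by case: (i \in cs) => h; [apply: lt_le_trans h; lra|apply/negbTE; rewrite -leNgt; lra].
Qed.

End Main.

Lemma corner_max (R : realType) d (F : ('I_d -> R) -> R) :
  exists cs : {set 'I_d}, forall c, `|F (ind R d c)| <= `|F (ind R d cs)|.
Proof.
case: (@arg_maxP _ _ _ (finset.set0 : {set 'I_d}) xpredT (fun c => `|F (ind R d c)|) isT) => cs _ H.
by exists cs => c; exact: H.
Qed.

Lemma gen_bound (R : realType) d (Rs : {pred nat}) m : (0 < d)%N -> inM Rs m ->
  has_ubound [set `|m x - maxfun x| | x in cube (R:=R) (d:=d)] /\
  0 <= supnorm (fun x => m x - maxfun x).
Proof.
move=> d0 im.
have [cs Hcs] := @corner_max R d (fun x => m x - maxfun x).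
have ub : has_ubound [set `|m x - maxfun x| | x in cube (R:=R) (d:=d)].
  exists `|m (ind R d cs) - maxfun (ind R d cs)| => _ [x cx <-].
  exact: (@bound_corner R d (fun y => m y - maxfun y) x _ (@interp_g R d Rs m x d0 im cx) Hcs).
split => //.
have c0 : cube (R:=R) (d:=d) (fun=> 0) by move=> i; rewrite lexx ler01.
apply: le_trans (ub_le_sup ub _); first exact: (normr_ge0 (m (fun=> 0) - maxfun (fun=> 0))).
by exists (fun=> 0).
Qed.

Theorem lemma4 (R : realType) (d : nat) (Rs : {pred nat})
  (mstar : ('I_d -> R) -> R) (eps : R) :
  (2 <= d)%N ->
  (forall r, r \in Rs -> (r < d)%N) ->
  0%N \in Rs ->
  inMs Rs mstar ->
  (forall m : ('I_d -> R) -> R, inMs Rs m ->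
     supnorm (fun x => mstar x - maxfun x) <= supnorm (fun x => m x - maxfun x)) ->
  0 <= eps -> eps < err d Rs / 2 ->
  (((err d Rs / 2 - eps) ^+ d)%:E <= lebesgue_outer (Wset mstar eps))%E.
Proof.
move=> d2 _ R0 [inm _] opt eps0 epsl.
have d0 : (0 < d)%N by apply: leq_trans d2.
pose g := fun x => mstar x - maxfun x.
have gi x : cube x -> g x = \sum_c w R d x c * g (ind R d c).
  by move=> cx; exact: (@interp_g R d Rs mstar x d0 inm cx).
have [cs Hcs] := @corner_max R d g.
pose M0 := `|g (ind R d cs)|.
have gb x : cube x -> `|g x| <= M0.
  by move=> cx; exact: (@bound_corner R d g x _ (gi x cx) Hcs).
have [ubg _] := @gen_bound R d Rs mstar d0 inm.
have c0 : cube (R:=R) (d:=d) (fun=> 0) by move=> i; rewrite lexx ler01.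
have e_le : err d Rs <= supnorm g.
  rewrite /err; apply: ge_inf.
    by exists 0 => _ [m im <-]; exact: (@gen_bound R d Rs m d0 im).2.
  by exists mstar.
have sup_le : supnorm g <= M0.
  apply: ge_sup; first by exists `|g (fun=> 0)|; exists (fun=> 0).
  by move=> _ [x cx <-]; exact: gb.
have M0_le : M0 <= supnorm g.
  by apply: ub_le_sup => //; exists (ind R d cs) => //; exact: ind_cube.
have half : supnorm g <= 1 / 2.
  apply: le_trans (opt (fun=> 1 / 2) _) _.
    split; last by [].
    exists (1 / 2), (fun=> 0) => x; rewrite R0 big1 ?addr0 // => A _.
    by rewrite mul0r.
  apply: ge_sup; first by exists `|1 / 2 - maxfun (fun _ : 'I_d => (0:R))|; exists (fun=> 0).
  move=> _ [x cx <-].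
  have mx0 := @smax_ge0 R d [set: 'I_d]%SET x cx.
  have mx1 := @smax_le1 R d [set: 'I_d]%SET x cx.
  rewrite cardsT card_ord in mx0 mx1.
  have := mx0 d0; have := mx1 d0; rewrite /maxfun => h1 h0.
  rewrite ler_norml; apply/andP; split; lra.
set e := err d Rs in epsl e_le *.
set r := e / 2 - eps.
have r0 : 0 < r by rewrite /r; lra.
have r1 : 2 * r <= 1 by rewrite /r; lra.
pose lo := fun i => if i \in cs then 1 - r else 0.
apply: (@cover_box R d lo r _ (ltW r0)) => x /= xb.
have hx : forall i, if i \in cs then 1 - r <= x i else x i <= r.
  move=> i; have := xb i; rewrite /lo; case: (i \in cs) => /andP[h1 h2] //.
  by move: h2; rewrite add0r.
have cx : cube x.
  move=> i; have := xb i; rewrite /lo; case: (i \in cs) => /andP[h1 h2]; apply/andP; split; lra.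
split => //.
rewrite distrC.
have := @lower_corner R d g x M0 cs r (gi x cx) Hcs erefl (@w_box R d x cs r (ltW r0) r1 hx) (normr_ge0 _).
rewrite -/(g x) => h.
have hM : e <= M0 by lra.
have hM2 : M0 <= 1 / 2 by lra.
have hr : r = e / 2 - eps by [].
have hh : 0 <= (1 / 2 - M0) * r by apply: mulr_ge0; [rewrite subr_ge0 | exact: ltW].
move: h.
nra.
Qed.
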